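(* Let $\mathcal{P}$ be a collection of cells with maximal rectangles $\mathcal{B}_1,\dots,\mathcal{B}_p$. Then there exists $i\in[p]$ such that $\overline{\mathcal{B}_i}=\mathcal{B}_i\setminus\bigcup_{j\in[p]\setminus\{i\}}\mathcal{B}_j\neq\emptyset$.
   Context: A cell is $[a,a+(1,1)]\subset\mathbb{R}^2$ with $a\in\mathbb{Z}^2$ its lower left corner; a collection of cells is a non-empty finite set of cells. For lower left corners $a\le b$ (componentwise), the rectangle $[A,B]$ is the set of cells whose lower left corner $c$ satisfies $a\le c\le b$. A maximal rectangle of $\mathcal{P}$ is a rectangle all of whose cells lie in $\mathcal{P}$ and not properly contained in another such rectangle. *)

(* Defs.v *)
From mathcomp Require Import all_boot all_order all_algebra.
Set Implicit Arguments. Unset Strict Implicit. Unset Printing Implicit Defensive.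
Import Order.TTheory GRing.Theory Num.Theory.
Local Open Scope ring_scope.

(* A cell [a, a+(1,1)] is identified with its lower left corner a in Z^2. *)
Definition cell := (int * int)%type.

Definition cle (a b : cell) : bool := (a.1 <= b.1) && (a.2 <= b.2).

Definition in_rect (a b c : cell) : bool := cle a c && cle c b.

Definition rect_in (P : seq cell) (a b : cell) : Prop :=
  cle a b /\ forall c, in_rect a b c -> c \in P.

Definition maximal_rect (P : seq cell) (a b : cell) : Prop :=
  rect_in P a b /\
  forall a' b', rect_in P a' b' ->
    (forall c, in_rect a b c -> in_rect a' b' c) ->
    (forall c, in_rect a' b' c -> in_rect a b c).

(* Main.v *)
Require Import Defs.
From mathcomp Require Import all_boot all_order all_algebra.
From mathcomp Require Import zify.
From Stdlib Require Import Classical.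
Import Order.TTheory GRing.Theory Num.Theory.
Local Open Scope ring_scope.

Lemma argmin (f : cell -> int) (s : seq cell) : s != [::] ->
  exists2 p, p \in s & forall q, q \in s -> f p <= f q.
Proof.
elim: s => // x s IH _.
case: (eqVneq s [::]) => [->|ns].
  exists x; first by rewrite inE eqxx.
  by move=> q; rewrite inE => /eqP->; apply: lexx.
have [p ps hp] := IH ns.
case: (lerP (f x) (f p)) => h.
  exists x; first by rewrite inE eqxx.
  move=> q; rewrite inE => /orP[/eqP->|/hp]; first exact: lexx.
  exact: le_trans h.
exists p; first by rewrite inE ps orbT.
move=> q; rewrite inE => /orP[/eqP->|/hp//]; exact: ltW.
Qed.

Lemma run (Q : int -> Prop) (z0 M : int) : Q z0 -> (forall z, Q z -> z <= M) ->
  exists k, z0 <= k /\ Q k /\ ~ Q (k+1).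
Proof.
move=> Q0 HM.
suff H: forall n : nat, forall z, z0 <= z -> Q z -> M - z <= n%:Z ->
    exists k, z0 <= k /\ Q k /\ ~ Q (k+1).
  have := HM _ Q0 => h.
  apply: (H `|M - z0|%N z0 (lexx _) Q0); lia.
elim=> [|n IH] z hz Qz hMz.
  exists z; split=>//; split=>// Qz1. have := HM _ Qz1. lia.
case: (classic (Q (z+1))) => [Qz1|nQ]; last by exists z.
apply: (IH (z+1)) => //; lia.
Qed.

Ltac clean := repeat match goal with H : ?T |- _ =>
  match T with
  | is_true (_ <= _) => fail 1
  | is_true (_ < _) => fail 1
  | is_true (_ && _) => fail 1
  | @eq int _ _ => fail 1
  | _ => clear H
  end end.
Ltac fl := clean; lia.

Theorem proposition2p6 (P : seq cell) (hP : P != [::]) :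
  exists a b : cell, maximal_rect P a b /\
    exists c : cell, in_rect a b c /\
      forall a' b' : cell, maximal_rect P a' b' -> (a', b') <> (a, b) ->
        ~~ in_rect a' b' c.
Proof.
have [p0 p0P hp0] := argmin (fun c => c.1) P hP.
have [pm pmP hpm] := argmin (fun c => - c.1) P hP.
have [pM pMP hpM] := argmin (fun c => - c.2) P hP.
have [pn pnP hpn] := argmin (fun c => c.2) P hP.
set x0 := p0.1 in hp0 *. have p0x : p0.1 = x0 by []. clearbody x0.
pose Q := fun z : int => x0 <= z /\ forall d, d \in P -> d.1 = x0 ->
   forall x, x0 <= x <= z -> (x, d.2) \in P.
have Q0 : Q x0.
  split; first exact: lexx.
  move=> d dP dx x hx. have ->: x = d.1 by rewrite dx; fl.
  by case: d dP {dx hx}.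
have QM : forall z, Q z -> z <= pm.1.
  move=> z [hz Qz]. have := hpm _ (Qz p0 p0P p0x z (ltac:(fl))). simpl. fl.
have [r [xr [Qr nQr]]] := @run _ _ _ Q0 QM.
have [c [cP [cx nc]]] : exists c, c \in P /\ c.1 = x0 /\ (r+1, c.2) \notin P.
  apply: NNPP => H; apply: nQr; split; first fl.
  move=> d dP dx x hx.
  case: (lerP x r) => hxr; first by apply: Qr.2 => //; fl.
  have ->: x = r+1 by fl.
  apply/negPn/negP => hn. by apply: H; exists d.
have cE : (x0, c.2) = c by rewrite -cx; case: (c).
case: c cP cx nc cE => c1 c2 /= cP cx nc cE.
pose Qh := fun z : int => c2 <= z /\ forall y, c2 <= y <= z -> (x0, y) \in P.
have Qh0 : Qh c2.
  split; first exact: lexx. move=> y hy. have ->: y = c2 by fl. by rewrite cE.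
have QhM : forall z, Qh z -> z <= pM.2.
  move=> z [hz Qz]. have := hpM _ (Qz z (ltac:(fl))). simpl. fl.
have [hi [chi [Qhi nQhi]]] := @run _ _ _ Qh0 QhM.
have nhi : (x0, hi+1) \notin P.
  apply/negP => h; apply: nQhi; split; first fl.
  move=> y hy. case: (lerP y hi) => hyh; first by apply: Qhi.2; fl.
  by have ->: y = hi+1 by fl.
pose Ql := fun z : int => - c2 <= z /\ forall y, - z <= y <= c2 -> (x0, y) \in P.
have Ql0 : Ql (- c2).
  split; first exact: lexx. move=> y hy. have ->: y = c2 by fl. by rewrite cE.
have QlM : forall z, Ql z -> z <= - pn.2.
  move=> z [hz Qz]. have := hpn _ (Qz (- z) (ltac:(fl))). simpl. fl.
have [k [ck [Qk nQk]]] := @run _ _ _ Ql0 QlM.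
have nlo : (x0, - k - 1) \notin P.
  apply/negP => h; apply: nQk; split; first fl.
  move=> y hy. case: (lerP (- k) y) => hyh; first by apply: Qk.2; fl.
  by have ->: y = - k - 1 by fl.
have colP : forall y, - k <= y <= hi -> (x0, y) \in P.
  move=> y hy. case: (lerP y c2) => h; first by apply: Qk.2; fl.
  by apply: Qhi.2; fl.
have key : forall a' b', rect_in P a' b' -> in_rect a' b' (c1, c2) ->
    [/\ x0 <= a'.1, - k <= a'.2, b'.1 <= r & b'.2 <= hi].
  move=> [a1 a2] [b1 b2] [/andP[/= h1 h2] hin] /andP[/andP[/= i1 i2] /andP[/= i3 i4]].
    have mem : forall x y, a1 <= x <= b1 -> a2 <= y <= b2 -> (x,y) \in P.
    move=> x y hx hy; apply: hin; apply/andP; split; apply/andP; split => /=; fl.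
  split => /=.
  - have := hp0 (a1, a2) (mem a1 a2 ltac:(fl) ltac:(fl)). by [].
  - case: (lerP (- k) a2) => // h. exfalso. move/negP: nlo; apply.
    apply: mem; fl.
  - case: (lerP b1 r) => // h. exfalso. move/negP: nc; apply.
    apply: mem; fl.
  - case: (lerP b2 hi) => // h. exfalso. move/negP: nhi; apply.
    apply: mem; fl.
have inR : in_rect (x0, - k) (r, hi) (c1, c2).
  apply/andP; split; apply/andP; split => /=; fl.
have rR : rect_in P (x0, - k) (r, hi).
  split; first by apply/andP; split => /=; fl.
  move=> e /andP[/andP[/= e1 e2] /andP[/= e3 e4]].
  have := Qr.2 (x0, e.2) (colP e.2 ltac:(fl)) erefl e.1 ltac:(fl).
  by case: (e).
have sub : forall a' b', rect_in P a' b' -> in_rect a' b' (c1, c2) ->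
    forall e, in_rect a' b' e -> in_rect (x0, - k) (r, hi) e.
  move=> a' b' ra ic e /andP[/andP[e1 e2] /andP[e3 e4]].
  have [k1 k2 k3 k4] := key a' b' ra ic.
  apply/andP; split; apply/andP; split => /=; fl.
exists (x0, - k), (r, hi); split.
  split => // a' b' ra hs. exact: sub ra (hs _ inR).
exists (c1, c2); split => // a' b' [ra ma] hne. apply/negP => ic. apply: hne.
have s2 := ma _ _ rR (sub a' b' ra ic).
have [k1 k2 k3 k4] := key a' b' ra ic.
have := s2 (x0, - k) ltac:(apply/andP; split; apply/andP; split => /=; fl).
have := s2 (r, hi) ltac:(apply/andP; split; apply/andP; split => /=; fl).
move: k1 k2 k3 k4.
case: a' {ra ma ic s2} => [a1 a2]; case: b' => [b1 b2] /= k1 k2 k3 k4.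
move=> /andP[/andP[/= j1 j2] /andP[/= j3 j4]] /andP[/andP[/= l1 l2] /andP[/= l3 l4]].
congr (_, _); congr (_, _); fl.
Qed.
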